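(* Let $G=(S,C,\emptyset)$ be a spider graph with weight $r$ and empty head. If $G$ is thin ($r\ge2$), then $\tilde\gamma_{gr}^{\times2}(G)=2r$ and $(c_1,\dots,c_r,s_1,\dots,s_r)$ is an MDNS of $G$. If $G$ is thick ($r\ge3$), then $\tilde\gamma_{gr}^{\times2}(G)=r+2$ and $(s_1,\dots,s_r,c_1,c_2)$ is an MDNS of $G$.
   Context: Graphs are finite, simple, undirected; $N[v]$ closed neighborhood. A sequence of distinct vertices $(v_1,\dots,v_k)$ is a double neighborhood sequence (DNS) if for each $i$ some $w\in N[v_i]$ satisfies $|\{j<i:w\in N[v_j]\}|\le1$; an MDNS is a DNS of maximum length and $\tilde\gamma_{gr}^{\times2}$ is that length. A spider graph $(S,C,\emptyset)$ with weight $r$ has vertex set $S\cup C$ with $S=\{s_1,\dots,s_r\}$ stable and $C=\{c_1,\dots,c_r\}$ a clique; thin: $s_ic_j\in E$ iff $i=j$; thick: $s_ic_j\in E$ iff $i\neq j$. *)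

(* Defs.v *)
From mathcomp Require Import all_boot.
Set Implicit Arguments. Unset Strict Implicit. Unset Printing Implicit Defensive.

(* A graph on a finite type T is given by its adjacency relation e
   (for simple graphs: symmetric and irreflexive). *)

Definition cnbhd (T : finType) (e : rel T) (v : T) : {set T} :=
  [set w | (w == v) || e v w].

Definition dnsb (T : finType) (e : rel T) (s : seq T) : bool :=
  uniq s &&
  [forall i : 'I_(size s),
     [exists w in cnbhd e (tnth (in_tuple s) i),
        count (fun u => w \in cnbhd e u) (take i s) <= 1]].

Definition gamma_dns (T : finType) (e : rel T) : nat :=
  \max_(n < #|T|.+1 | [exists t : n.-tuple T, dnsb e t]) n.

Definition is_mdns (T : finType) (e : rel T) (s : seq T) : Prop :=
  dnsb e s /\ forall t : seq T, dnsb e t -> size t <= size s.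

(* Spider graph (S, C, empty) with weight r: vertex inl i = s_(i+1),
   inr i = c_(i+1). S stable, C a clique. *)
Definition spider_vertex (r : nat) : finType := ('I_r + 'I_r)%type.

Definition thin_spider (r : nat) : rel (spider_vertex r) :=
  fun x y => match x, y with
  | inl i, inr j => i == j
  | inr i, inl j => i == j
  | inr i, inr j => i != j
  | inl _, inl _ => false
  end.

Definition thick_spider (r : nat) : rel (spider_vertex r) :=
  fun x y => match x, y with
  | inl i, inr j => i != j
  | inr i, inl j => i != j
  | inr i, inr j => i != j
  | inl _, inl _ => false
  end.

Definition S_seq (r : nat) : seq (spider_vertex r) := [seq inl i | i <- enum 'I_r].
Definition C_seq (r : nat) : seq (spider_vertex r) := [seq inr i | i <- enum 'I_r].
Arguments thin_spider r : clear implicits.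
Arguments thick_spider r : clear implicits.
Arguments S_seq r : clear implicits.
Arguments C_seq r : clear implicits.

(* Main.v *)
Require Import Defs.
From mathcomp Require Import all_boot zify.
Set Warnings "-notation-overridden -duplicate-clear".

Section Gen.
Variable T : finType.
Variable e : rel T.

Lemma dnsE (s : seq T) (x0 : T) :
  dnsb e s = uniq s && [forall i : 'I_(size s), [exists w in cnbhd e (nth x0 s i),
     count (fun u => w \in cnbhd e u) (take i s) <= 1]].
Proof.
rewrite /dnsb; congr (_ && _); apply: eq_forallb => i; by rewrite (tnth_nth x0).
Qed.

Lemma dns_intro (s : seq T) (x0 : T) : uniq s ->
  (forall i, i < size s -> exists w, (w \in cnbhd e (nth x0 s i)) &&
     (count (fun u => w \in cnbhd e u) (take i s) <= 1)) -> dnsb e s.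
Proof.
move=> Hu H; rewrite (dnsE s x0) Hu /=; apply/forallP => i.
have [w Hw] := H i (ltn_ord i); apply/existsP; by exists w.
Qed.

Lemma dns_elim (s : seq T) (x0 : T) i : dnsb e s -> i < size s ->
  exists w, (w \in cnbhd e (nth x0 s i)) &&
     (count (fun u => w \in cnbhd e u) (take i s) <= 1).
Proof.
rewrite (dnsE s x0) => /andP [_ /forallP H] Hi.
have /existsP [w Hw] := H (Ordinal Hi); by exists w.
Qed.

Lemma notin_take (s : seq T) (x0 : T) i : uniq s -> i < size s ->
  nth x0 s i \notin take i s.
Proof.
move=> Hu Hi; rewrite -(cat_take_drop i s) cat_uniq in Hu.
case/and3P: Hu => _ Hd _.
have Hm: nth x0 s i \in drop i s.
  by rewrite -[X in nth x0 s X]addn0 -nth_drop mem_nth // size_drop subn_gt0.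
apply/negP => Hin; move/hasPn: Hd => Hd; by move: (Hd _ Hm); rewrite Hin.
Qed.

Lemma count1 (P : pred T) (y : T) (s : seq T) : uniq s ->
  (forall u, u \in s -> P u -> u = y) -> count P s <= 1.
Proof.
elim: s => //= a s IH /andP [Ha Hu] H.
case Pa: (P a) => /=.
- have Ea := H a (mem_head _ _) Pa.
  have: ~~ has P s.
    apply/hasPn => u Hus; apply/negP => Pu.
    have Eu : u = y by apply: H => //; rewrite inE Hus orbT.
    by move: Ha; rewrite Ea -Eu Hus.
  by rewrite has_count -leqNgt leqn0 => /eqP ->.
- rewrite add0n; apply IH => // u Hus; apply H; by rewrite inE Hus orbT.
Qed.

Lemma count_add_le (a b c : pred T) s : (forall u, a u + b u <= c u) ->
  count a s + count b s <= count c s.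
Proof. move=> H; elim: s => //= u s IH; have := H u; lia. Qed.

Lemma count_le_add (a b c : pred T) s : (forall u, a u <= b u + c u) ->
  count a s <= count b s + count c s.
Proof. move=> H; elim: s => //= u s IH; have := H u; lia. Qed.

Lemma gamma_eq (s : seq T) : dnsb e s -> (forall t, dnsb e t -> size t <= size s) ->
  gamma_dns e = size s.
Proof.
move=> Hs H; apply/eqP; rewrite eqn_leq; apply/andP; split.
  apply/bigmax_leqP => n /existsP [t Ht]; rewrite -(size_tuple t); exact: H.
have Hlt: size s < #|T|.+1.
  rewrite ltnS; have /andP [Hu _] := Hs; move/card_uniqP: Hu => <-; exact: max_card.
apply: (@leq_bigmax_cond _ _ _ (Ordinal Hlt)).
apply/existsP; by exists (in_tuple s).
Qed.

End Gen.

Lemma size_S r : size (S_seq r) = r. Proof. by rewrite size_map size_enum_ord. Qed.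
Lemma size_C r : size (C_seq r) = r. Proof. by rewrite size_map size_enum_ord. Qed.
Lemma uniq_S r : uniq (S_seq r).
Proof. rewrite map_inj_uniq ?enum_uniq // => x y [] //. Qed.
Lemma uniq_C r : uniq (C_seq r).
Proof. rewrite map_inj_uniq ?enum_uniq // => x y [] //. Qed.
Lemma uniq_CS r : uniq (C_seq r ++ S_seq r).
Proof.
rewrite cat_uniq uniq_S uniq_C andbT /=.
apply/hasPn => u /mapP [k _ ->]; apply/mapP => [[k' _]] //.
Qed.
Lemma card_sp r : #|spider_vertex r| = r + r.
Proof. by rewrite card_sum !card_ord. Qed.

Lemma thin_dns r (o : 'I_r) : dnsb (thin_spider r) (C_seq r ++ S_seq r).
Proof.
have Hu := uniq_CS r.
apply: (@dns_intro _ _ _ (inl o)) => // i Hi.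
have Hn := @notin_take _ _ (inl o) _ Hu Hi.
move: Hn; case: (nth _ _ i) => k Hn.
- exists (inl k); rewrite /cnbhd inE eqxx /=.
  apply: (@count1 _ _ (inr k)); first exact: take_uniq.
  move=> [a|a] Ha; rewrite inE /= ?orbF.
  + by move/eqP => [] E; move: Hn; rewrite E Ha.
  + by move/eqP => ->.
- exists (inl k); rewrite /cnbhd inE /= eqxx /=.
  apply: (@count1 _ _ (inl k)); first exact: take_uniq.
  move=> [a|a] Ha; rewrite inE /= ?orbF.
  + by move/eqP => [] ->.
  + by move/eqP => E; move: Hn; rewrite -E Ha.
Qed.

Lemma thick_dns r : 3 <= r -> dnsb (thick_spider r) (S_seq r ++ take 2 (C_seq r)).
Proof.
move=> Hr.
have Hsz : size (take 2 (C_seq r)) = 2 by rewrite size_take size_C; case: r Hr => [|[|[|]]].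
have Hut : uniq (take 2 (C_seq r)) by apply: take_uniq; exact: uniq_C.
have Hsub : forall u, u \in take 2 (C_seq r) -> exists k, u = inr k.
  by move=> u /mem_take /mapP [k _ ->]; exists k.
case E: (take 2 (C_seq r)) Hsz Hut Hsub => [|x [|y [|]]] // _ Hut Hsub.
have [a Ea] := Hsub x (mem_head _ _).
have [b Eb] : exists k, y = inr k by apply: Hsub; rewrite inE mem_head orbT.
subst x y.
have Hab : a != b.
  by move: Hut; rewrite /= inE andbT; apply: contra => /eqP ->.
have o : 'I_r by exact: a.
have Hu : uniq (S_seq r ++ [:: inr a; inr b]).
  rewrite cat_uniq uniq_S Hut andbT.
  apply/hasPn => u; rewrite !inE => /orP [] /eqP ->; apply/mapP => [[k _]] //.
apply: (@dns_intro _ _ _ (inr a)) => // i Hi.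
rewrite size_cat size_S /= in Hi.
rewrite nth_cat take_cat size_S.
case: ltnP => Hir.
- have : nth (inr a) (S_seq r) i \in S_seq r by rewrite mem_nth // size_S.
  case/mapP => k _ ->.
  exists (inl k); rewrite /cnbhd inE eqxx /=.
  apply: (@count1 _ _ (inl k)); first by apply: take_uniq; exact: uniq_S.
  move=> u /mem_take /mapP [c _ ->]; rewrite inE /= ?orbF.
  by move/eqP => [] ->.
- have : (i - r = 0) \/ (i - r = 1) by lia.
  case=> ->.
  + exists (inl b); rewrite /cnbhd inE /=; apply/andP; split; first exact: Hab.
    rewrite cats0.
    apply: (@count1 _ _ (inl b)); first exact: uniq_S.
    move=> u /mapP [c _ ->]; rewrite inE /= ?orbF.
    by move/eqP => [] ->.
  + exists (inl a); rewrite /cnbhd inE /=; apply/andP; split; first by rewrite eq_sym.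
    apply: (@count1 _ _ (inl a)); first by rewrite /= cat_uniq uniq_S /= andbT orbF; apply/mapP => [[k _]].
    move=> u; rewrite mem_cat => /orP [/mapP [c _ ->]|]; rewrite ?inE /= ?orbF.
    * by move/eqP => [] ->.
    * by move/eqP => ->; rewrite /= eqxx.
Qed.

Definition isl r : pred (spider_vertex r) := fun u => if u is inl _ then true else false.

Lemma countS_le r (p : seq (spider_vertex r)) : uniq p -> count (isl r) p <= r.
Proof.
move=> Hu; suff: size (filter (isl r) p) <= size (S_seq r) by rewrite size_S size_filter.
apply: uniq_leq_size; first exact: filter_uniq.
move=> [k|k]; rewrite mem_filter //= => _; apply/mapP; exists k => //; exact: mem_enum.
Qed.

Lemma countS_lt r (p : seq (spider_vertex r)) j : uniq p -> inl j \notin p ->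
  count (isl r) p <= r - 1.
Proof.
move=> Hu Hj.
have Hm : inl j \in S_seq r by apply/mapP; exists j => //; exact: mem_enum.
suff: size (filter (isl r) p) <= size (rem (inl j) (S_seq r)) by rewrite (size_rem Hm) size_S size_filter subn1.
apply: uniq_leq_size; first exact: filter_uniq.
move=> [k|k]; rewrite mem_filter //= => Hk.
rewrite (mem_rem_uniq _ (uniq_S r)) inE /=.
apply/andP; split.
  by apply: contraNneq Hj => <-.
apply/mapP; exists k => //; exact: mem_enum.
Qed.

Lemma thick_bound r (t : seq (spider_vertex r)) : dnsb (thick_spider r) t -> size t <= r + 2.
Proof.
move=> Hd; rewrite leqNgt; apply/negP => Hlt.
have Hu : uniq t by case/andP: Hd.
case Et: t => [|x0 t']; first by move: Hlt; rewrite Et.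
have Hi : (size t).-1 < size t by lia.
have [w /andP [_ Hc]] := @dns_elim _ _ t x0 _ Hd Hi.
set p := take (size t).-1 t in Hc.
have Hup : uniq p by apply: take_uniq.
have Hsp : size p = (size t).-1 by rewrite /p size_take Hi.
have HS := @countS_le r p Hup.
have {Hsp} Hsp : (size p).+1 = size t by rewrite Hsp prednK // (leq_trans _ Hlt).
clearbody p.
have HSC := count_predC (isl r) p.
case: w Hc => [j|m] Hc.
- have H1 : count (pred1 (inl j)) p + count (fun u => predC (isl r) u && (u != inr j)) p
      <= count (fun u => inl j \in cnbhd (thick_spider r) u) p.
    apply: count_add_le => [[k|k]]; rewrite /cnbhd /= !inE /=.
      by rewrite (eq_sym (inl j)) addn0 orbF; case: (_ == _).
    by case: (k =P j) => [->|_]; rewrite ?eqxx //; case: (_ != _).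
  have H2 : count (predC (isl r)) p <=
      count (fun u => predC (isl r) u && (u != inr j)) p + count (pred1 (inr j)) p.
    apply: count_le_add => u /=; case: (u == inr j); case: (isl r u) => //.
  have H3 := count_uniq_mem (inr j) Hup.
  have H4 := count_uniq_mem (inl j) Hup.
  have H5 : count (pred1 (inr j)) p <= 1 by rewrite H3 leq_b1.
  have [Hjp|Hjp] := boolP (inl j \in p).
  + rewrite Hjp /= in H4; have H6 := leq_trans H1 Hc; move: H6 H2 H5 HSC HS Hsp Hlt; rewrite H4; lia.
  + rewrite (negbTE Hjp) /= in H4; have HS' := @countS_lt r p j Hup Hjp.
    have H6 := leq_trans H1 Hc; move: H6 H2 H5 HSC HS' Hsp Hlt (ltn_ord j); rewrite H4; lia.
- have H1 : count (predC (isl r)) p <= count (fun u => inr m \in cnbhd (thick_spider r) u) p.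
    apply: sub_count => [[k|k]] //=; rewrite /cnbhd /= !inE /= => _.
    case: (k =P m) => [->|/eqP H]; by rewrite ?eqxx // orbT.
  have H6 := leq_trans H1 Hc; move: H6 HSC HS Hsp Hlt; lia.
Qed.

Theorem lemma5 (r : nat) :
  (2 <= r ->
     gamma_dns (thin_spider r) = 2 * r /\
     is_mdns (thin_spider r) (C_seq r ++ S_seq r)) /\
  (3 <= r ->
     gamma_dns (thick_spider r) = r + 2 /\
     is_mdns (thick_spider r) (S_seq r ++ take 2 (C_seq r))).
Proof.
split=> Hr.
- have H0 : 0 < r by lia.
  pose o : 'I_r := Ordinal H0.
  have Hd := @thin_dns r o.
  have Hb : forall t, dnsb (thin_spider r) t -> size t <= size (C_seq r ++ S_seq r).
    move=> t /andP [/card_uniqP Hu _]; rewrite size_cat size_C size_S -Hu -card_sp.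
    exact: max_card.
  split; first last. exact: (conj Hd Hb).
  by rewrite (@gamma_eq _ _ _ Hd Hb) size_cat size_C size_S; lia.
- have Hd := @thick_dns r Hr.
  have Hsz : size (S_seq r ++ take 2 (C_seq r)) = r + 2.
    by rewrite size_cat size_S size_take size_C Hr.
  have Hb : forall t, dnsb (thick_spider r) t -> size t <= size (S_seq r ++ take 2 (C_seq r)).
    by move=> t Ht; rewrite Hsz; exact: (@thick_bound r t).
  split; first last. exact: (conj Hd Hb).
  by rewrite (@gamma_eq _ _ _ Hd Hb).
Qed.
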